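(* Let $S$ be an isolated invariant set for $f$ with a Morse decomposition $\mathcal M(\mathcal P,<)=\{M_p:p\in\mathcal P\}$, and let $P=(N,L)$ be a filtration pair for $S$ with pointed space map $f_P:N_L\to N_L$. Let $\hat S=\operatorname{Inv}N_L$ (with respect to $f_P$). Let $\hat{\mathcal P}=\mathcal P\cup\{0\}$ with the order extending $<$ by $0<p$ for all $p\in\mathcal P$, and let $\hat M_p=M_p$ for $p\in\mathcal P$ (viewed in $N_L$ via the quotient map, which is injective on $N\setminus L\supset S$) and $\hat M_0=\{[L]\}$. Then $\hat{\mathcal M}(\hat{\mathcal P},<)=\{\hat M_p:p\in\hat{\mathcal P}\}$ is a Morse decomposition of $\hat S$ for the map $f_P$.
   Context: Let $X$ be a locally compact metric space, $U\subset X$ open and $f:U\to X$ continuous (the same definitions below apply to any continuous self-map, in particular to $f_P$ on $N_L$). A solution through $x$ is a map $\sigma:\mathbb Z\to U$ with $\sigma(0)=x$ and $f(\sigma(n))=\sigma(n+1)$ for all $n$; for $N\subset U$, $\operatorname{Inv}N$ is the set of $x\in N$ admitting a solution through $x$ with values in $N$. A compact $N$ is an isolating neighborhood if $\operatorname{Inv}N\subset\operatorname{Int}N$; $S$ is an isolated invariant set if $S=\operatorname{Inv}N$ for some isolating neighborhood $N$. The exit set is $N^-=\{x\in N:f(x)\notin\operatorname{Int}N\}$. A filtration pair for $S$ is a pair of compact sets $L\subset N$ in the interior of the domain of $f$, each the closure of its interior, with (1) $\operatorname{cl}(N\setminus L)$ an isolating neighborhood and $\operatorname{Inv}\operatorname{cl}(N\setminus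 L)=S$; (2) $L$ a neighborhood of $N^-$ in $N$; (3) $f(L)\cap\operatorname{cl}(N\setminus L)=\emptyset$. $N_L=N/L$ with $L$ collapsed to the base point $[L]$ (if $L=\emptyset$, a disjoint point $[L]$ is adjoined), $p:N\to N_L$ the quotient map, and $f_P([L])=[L]$, $f_P(p(x))=p(f(x))$ for $x\in N\setminus L$. $\omega(x)=\bigcap_{K>0}\operatorname{cl}\big(\bigcup_{n>K}\{f^n(x)\}\big)$, $\omega(\sigma)=\omega(\sigma(0))$, $\alpha(\sigma)=\bigcap_{K>0}\operatorname{cl}\big(\bigcup_{n>K}\{\sigma(-n)\}\big)$. For a finite set $\mathcal P$ with a partial order $<$ (irreflexive, transitive), a collection $\{M_p\subset S:p\in\mathcal P\}$ of pairwise disjoint isolated invariant sets is a Morse decomposition of an invariant set $S$ if for every $x\in S$ and every solution $\sigma:\mathbb Z\to S$ through $x$, either $\sigma(\mathbb Z)\subset M_p$ for some $p$, or $\omega(\sigma)\subset M_p$ and $\alpha(\sigma)\subset M_q$ for some $p<q$. *)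

(* Defs.v *)
From HB Require Import structures.
From mathcomp Require Import all_boot all_order all_algebra.
From mathcomp Require Import all_classical all_reals all_analysis.
Set Implicit Arguments. Unset Strict Implicit. Unset Printing Implicit Defensive.
Import Order.TTheory GRing.Theory Num.Theory.
Local Open Scope classical_set_scope.

(* f is given as a total function T -> T; only its values on U matter. *)
Section Dynamics.
Context {T : topologicalType} (U : set T) (f : T -> T).

Definition solution (x : T) (sigma : int -> T) : Prop :=
  [/\ sigma 0%R = x, (forall n, U (sigma n)) &
      (forall n, f (sigma n) = sigma (n + 1)%R)].

Definition InvS (N : set T) : set T :=
  [set x | N x /\ exists sigma, solution x sigma /\ forall n, N (sigma n)].

Definition isolating_neighborhood (N : set T) : Prop :=
  [/\ compact N, N `<=` U & InvS N `<=` interior N].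

Definition isolated_invariant_set (S : set T) : Prop :=
  exists N, isolating_neighborhood N /\ S = InvS N.

Definition exit_set (N : set T) : set T :=
  [set x | N x /\ ~ interior N (f x)].

Definition omega_limit (x : T) : set T :=
  \bigcap_(K in [set K : nat | (0 < K)%N])
     closure [set iter n f x | n in [set n : nat | (K < n)%N]].

Definition omega_sol (sigma : int -> T) : set T := omega_limit (sigma 0%R).

Definition alpha_sol (sigma : int -> T) : set T :=
  \bigcap_(K in [set K : nat | (0 < K)%N])
     closure [set sigma (- (n%:Z))%R | n in [set n : nat | (K < n)%N]].

Definition Morse_decomposition (S : set T) (P : finType) (lt : rel P)
    (M : P -> set T) : Prop :=
  [/\ (irreflexive lt /\ transitive lt),
      (forall p, M p `<=` S),
      (forall p q, p != q -> (M p `&` M q) = set0),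
      (forall p, isolated_invariant_set (M p)) &
      (forall x sigma, S x -> solution x sigma -> (forall n, S (sigma n)) ->
          (exists p, range sigma `<=` M p) \/
          (exists p q, lt p q /\ omega_sol sigma `<=` M p /\
                       alpha_sol sigma `<=` M q))].

Definition filtration_pair (S N L : set T) : Prop :=
  [/\ (compact N /\ compact L /\ L `<=` N),
      (N `<=` interior U /\
       closure (interior N) = N /\ closure (interior L) = L),
      (isolating_neighborhood (closure (N `\` L)) /\
         InvS (closure (N `\` L)) = S),
      (* L is a neighborhood of N^- in N *)
      (exists W, open W /\ exit_set N `<=` W /\ N `&` W `<=` L) &
      (f @` L `&` closure (N `\` L)) = set0].

End Dynamics.

(* The pointed quotient space N_L = N/L.  Points are [L] (= None) and  *)
(* the points of N \ L (= Some x).  If L is empty, [L] is a disjoint   *)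
(* adjoined point.                                                     *)
Definition pquot {X : topologicalType} (N L : set X) : Type :=
  option (set_type (N `\` L)).

HB.instance Definition _ (X : topologicalType) (N L : set X) :=
  Choice.on (pquot N L).

Section PQuot.
Context {X : topologicalType} (N L : set X).

(* the quotient map p : N -> N_L (extended by [L] outside N) *)
Definition pq (x : X) : pquot N L :=
  match pselect (x \in N `\` L) with
  | left h => Some (exist _ x h)
  | right _ => None
  end.

(* quotient topology: V open iff p^{-1}(V) is open in the subspace N *)
Definition pquot_open (V : set (pquot N L)) : Prop :=
  exists W : set X, open W /\ N `&` (pq @^-1` V) = N `&` W.

Lemma pquot_openT : pquot_open setT.
Proof. by exists setT; split; [exact: openT|]. Qed.

Lemma pquot_openI : setI_closed pquot_open.
Proof.
move=> A B [WA [oA eA]] [WB [oB eB]]; exists (WA `&` WB); split.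
  exact: openI.
rewrite preimage_setI.
rewrite (_ : N `&` (pq @^-1` A `&` pq @^-1` B) =
             (N `&` pq @^-1` A) `&` (N `&` pq @^-1` B)); last first.
  by rewrite setIACA setIid.
by rewrite eA eB setIACA setIid.
Qed.

Lemma pquot_op_bigU (I : Type) (F : I -> set (pquot N L)) :
  (forall i, pquot_open (F i)) -> pquot_open (\bigcup_i F i).
Proof.
move=> hF; have [W hW] := choice hF.
exists (\bigcup_i W i); split.
  by apply: bigcup_open => i _; case: (hW i).
rewrite preimage_bigcup !setI_bigcupr; apply: eq_bigcupr => i _.
by case: (hW i).
Qed.

HB.instance Definition _ := isOpenTopological.Build (pquot N L)
  pquot_openT pquot_openI pquot_op_bigU.

Definition fP (f : X -> X) (y : pquot N L) : pquot N L :=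
  match y with
  | None => None
  | Some x => pq (f (val x))
  end.

End PQuot.

(* the extended index set P^ = P + {0} (0 = None) with 0 < p *)
Definition hat_lt {P : finType} (lt : rel P) : rel (option P) :=
  fun a b => match a, b with
             | None, Some _ => true
             | Some p, Some q => lt p q
             | _, _ => false
             end.

Definition hat_M {X : topologicalType} (N L : set X) {P : finType}
    (M : P -> set X) (a : option P) : set (pquot N L) :=
  match a with
  | None => [set None]
  | Some p => pq N L @` M p
  end.

Arguments pq {X} N L x.
Arguments fP {X} N L f y.
Arguments hat_M {X} N L {P} M a.
Arguments pquot {X} N L.

(* Main.v *)
Require Import Defs.
From HB Require Import structures.
From mathcomp Require Import all_boot all_order all_algebra.
From mathcomp Require Import all_classical all_reals all_analysis.
From mathcomp Require Import zify.
Set Implicit Arguments. Unset Strict Implicit. Unset Printing Implicit Defensive.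
Import Order.TTheory GRing.Theory Num.Theory.
Local Open Scope classical_set_scope.
Section Gen.
Context {T : topologicalType}.

Lemma compact_directed (C : set T) (I : Type) (D : set I) (B : I -> set T) :
  compact C -> (exists i, D i) ->
  (forall i j, D i -> D j -> exists2 k, D k & B k `<=` B i `&` B j) ->
  (forall i, D i -> B i !=set0) -> (forall i, D i -> B i `<=` C) ->
  exists2 u, C u & forall i, D i -> closure (B i) u.
Proof.
move=> cC [i0 Di0] dir ne sub.
have FF : Filter (filter_from D B) by apply: filter_from_filter; [exists i0|].
have PF : ProperFilter (filter_from D B) by apply: filter_from_proper.
have [|u [Cu clu]] := cC _ PF; first by exists i0 => //; apply: sub.
exists u => // i Di W Wu; have := clu (B i) W; apply => //; by exists i.
Qed.

Definition Lim (s : nat -> T) : set T :=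
  \bigcap_(K in [set K : nat | (0 < K)%N])
     closure [set s n | n in [set n : nat | (K < n)%N]].

Lemma LimP (s : nat -> T) z :
  Lim s z <-> forall K W, nbhs z W -> exists n, (K < n)%N /\ W (s n).
Proof.
split.
  move=> Lz K W zW; have := Lz K.+1 isT W zW.
  by move=> [_ [[n Kn <-] Wn]]; exists n; split => //; apply: ltnW.
move=> H K _ W zW; have [n [Kn Wn]] := H K W zW.
by exists (s n); split => //; exists n.
Qed.

Lemma Lim_ext (s t : nat -> T) : (forall n, s n = t n) -> Lim s = Lim t.
Proof. by move=> e; have -> : s = t by apply: funext. Qed.

Lemma Lim_shift (s : nat -> T) k : Lim (fun n => s (n + k)%N) = Lim s.
Proof.
apply/seteqP; split => z /LimP H; apply/LimP => K W zW.
  have [n [Kn Wn]] := H K W zW; exists (n + k)%N; split => //; lia.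
have [n [Kn Wn]] := H (K + k)%N W zW; exists (n - k)%N; split; first lia.
by have -> : (n - k + k = n)%N by lia.
Qed.

Lemma closed_Lim (s : nat -> T) : closed (Lim s).
Proof. by apply: closed_bigI => K _; apply: closed_closure. Qed.

Lemma Lim_sub (s : nat -> T) (A : set T) K0 :
  closed A -> (forall n, (K0 < n)%N -> A (s n)) -> Lim s `<=` A.
Proof.
move=> cA sA z /LimP H; apply: cA => W zW.
by have [n [Kn Wn]] := H K0 W zW; exists (s n); split => //; apply: sA.
Qed.

Lemma Lim_nonempty (s : nat -> T) (C : set T) :
  compact C -> (forall n, C (s n)) -> exists z, Lim s z /\ C z.
Proof.
move=> cC sC.
have [||||u Cu H] := @compact_directed C nat setT
  (fun K => [set s n | n in [set n : nat | (K < n)%N]]) cC.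
- by exists 0%N.
- move=> i j _ _; exists (maxn i j) => // _ [n Kn <-]; split; exists n => //=; move: Kn => /= Kn; lia.
- by move=> i _; exists (s i.+1); apply: imageP => /=.
- by move=> i _ _ [n _ <-].
exists u; split => //; apply/LimP => K W zW.
by have [_ [[n Kn <-] Wn]] := H K I W zW; exists n.
Qed.

Lemma Lim_fwd (f : T -> T) (a b : nat -> T) z :
  {for z, continuous f} -> (forall n, f (a n) = b n) -> Lim a z -> Lim b (f z).
Proof.
move=> fc ab /LimP H; apply/LimP => K W zW.
have : nbhs z (f @^-1` W) by apply: fc.
by move=> /(H K) [n [Kn Wn]]; exists n; rewrite -ab.
Qed.

End Gen.
Section Dyn.
Context {T : topologicalType} (hT : hausdorff_space T) (U : set T) (f : T -> T)
  (fc : forall x, U x -> {for x, continuous f}).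

Lemma bwd_gen (C : set T) (z : T) (I : Type) (D : set I) (B : I -> set T) :
  compact C -> C `<=` U -> (exists i, D i) ->
  (forall i j, D i -> D j -> exists2 k, D k & B k `<=` B i `&` B j) ->
  (forall i, D i -> B i !=set0) -> (forall i, D i -> B i `<=` C) ->
  (forall W, nbhs z W -> exists2 i, D i & B i `<=` f @^-1` W) ->
  exists2 u, C u & f u = z /\ forall i, D i -> closure (B i) u.
Proof.
move=> cC CU ex dir ne sub pre.
have [u Cu clu] := compact_directed cC ex dir ne sub.
exists u => //; split => //; apply: hT => A W uA zW.
have [i Di BiW] := pre W zW.
have : nbhs u (f @^-1` A) by apply: (fc (CU _ Cu)).
move=> /(clu i Di) [v [Bv Av]]; exists (f v); split => //; exact: BiW.
Qed.

Lemma Lim_bwd (C : set T) (a b : nat -> T) z :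
  compact C -> C `<=` U -> (forall n, C (a n)) -> (forall n, f (a n) = b n) ->
  Lim b z -> exists z', [/\ Lim a z', C z' & f z' = z].
Proof.
move=> cC CU aC ab /LimP Lz.
have [|||||u Cu [fu H]] := @bwd_gen C z (nat * set T)%type (fun p => nbhs z p.2)
  (fun p => [set a n | n in [set n | (p.1 < n)%N /\ p.2 (b n)]]) cC CU.
- by exists (0%N, setT); apply: filterT.
- move=> [i W1] [j W2] /= zW1 zW2; exists (maxn i j, W1 `&` W2) => /=.
    exact: filterI.
  move=> _ [n [Kn [W1n W2n]] <-]; split; exists n => //=; split => //; lia.
- move=> [K W] /= zW; have [n [Kn Wn]] := Lz K W zW.
  by exists (a n); apply: imageP.
- by move=> [K W] _ _ [n _ <-].
- by move=> W zW; exists (0%N, W) => // _ [n [_ Wn] <-] /=; rewrite ab.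
exists u; split => //; apply/LimP => K W uW.
have [_ [[n [Kn _] <-] Wn]] := H (K, setT) filterT W uW.
by exists n.
Qed.

Lemma sol_shift x sigma k : solution U f x sigma ->
  solution U f (sigma k) (fun n => sigma (n + k)%R).
Proof.
move=> [s0 sU sf]; split => //=; first by rewrite add0r.
by move=> n; rewrite sf addrAC.
Qed.

Lemma sol_iter x sigma n : solution U f x sigma -> iter n f x = sigma (Posz n).
Proof.
move=> [s0 sU sf]; elim: n => [|n IH] /=; first by rewrite s0.
by rewrite IH sf -[n.+1]addn1 PoszD.
Qed.

Lemma InvS_sol K x sigma : solution U f x sigma -> (forall n, K (sigma n)) ->
  forall n, InvS U f K (sigma n).
Proof.
move=> sol sK n; split; first exact: sK.
exists (fun m : int => sigma (m + n)%R); split.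
  by apply: (sol_shift n sol).
by move=> m; apply: sK.
Qed.

Lemma InvS_sub K : InvS U f K `<=` K.
Proof. by move=> x []. Qed.

Lemma InvS_U K x : InvS U f K x -> U x.
Proof. by move=> [_ [s [[s0 sU _] _]]]; rewrite -s0. Qed.

Lemma InvS_fwd K x : InvS U f K x -> InvS U f K (f x).
Proof.
move=> [Kx [s [sol sK]]]; have := InvS_sol sol sK 1.
by case: sol => s0 _ sf; rewrite -(add0r 1%R) -sf s0.
Qed.

Lemma InvS_bwd K x : InvS U f K x -> exists2 y, InvS U f K y & f y = x.
Proof.
move=> [Kx [s [sol sK]]]; exists (s (-1)%R); first exact: (InvS_sol sol sK).
by case: sol => s0 _ sf; rewrite sf addNr s0.
Qed.

Lemma inv_solution (A : set T) : A `<=` U ->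
  (forall z, A z -> A (f z)) -> (forall z, A z -> exists z', A z' /\ f z' = z) ->
  forall z, A z -> exists sigma, solution U f z sigma /\ forall n, A (sigma n).
Proof.
move=> AU fw bw z Az.
have : forall z, exists z', A z -> A z' /\ f z' = z.
  move=> y; case: (pselect (A y)) => [/bw [z' h]|nA]; first by exists z'.
  by exists y.
move=> /choice [g hg].
have Ag : forall n, A (iter n g z).
  by elim=> [|n IH] //=; case: (hg _ IH).
have Af : forall n, A (iter n f z).
  by elim=> [|n IH] //=; apply: fw.
pose s (n : int) := match n with Posz k => iter k f z | Negz k => iter k.+1 g z end.
exists s; split; last by case=> n; [exact: Af | exact: (Ag n.+1)].
split => //; first by case=> n; apply: AU; [exact: Af | exact: (Ag n.+1)].
case=> [k|k] /=; first by rewrite addn1.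
case: k => [|k].
  have -> : (Negz 0 + 1)%R = 0%R by [].
  by case: (hg z Az).
have -> : (Negz k.+1 + 1)%R = Negz k.
  by rewrite !NegzE -[k.+2]addn1 PoszD opprD addrK.
by case: (hg _ (Ag k.+1)).
Qed.

End Dyn.
Section Dyn2.
Context {T : topologicalType} (hT : hausdorff_space T) (U : set T) (f : T -> T)
  (fc : forall x, U x -> {for x, continuous f}).

Lemma iter_cont n z : (forall j, (j < n)%N -> U (iter j f z)) ->
  {for z, continuous (iter n f)}.
Proof.
elim: n => [|n IH] h; first exact: cvg_id.
have -> : iter n.+1 f = f \o iter n f by apply: funext.
apply: continuous_comp; first by apply: IH => j jn; apply: h; lia.
by apply: fc; apply: h.
Qed.

Lemma sub_InvS (A K : set T) : A `<=` K -> A `<=` U ->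
  (forall z, A z -> A (f z)) -> (forall z, A z -> exists z', A z' /\ f z' = z) ->
  A `<=` InvS U f K.
Proof.
move=> AK AU fw bw z Az; split; first exact: AK.
have [s [sol sA]] := inv_solution AU fw bw Az.
by exists s; split => // n; apply: AK.
Qed.

Lemma Inv_closed K : compact K -> K `<=` U -> closed (InvS U f K).
Proof.
move=> cK KU; have clK : closed K by apply: compact_closed.
have AK : closure (InvS U f K) `<=` K.
  by move=> z /(closureS (@InvS_sub _ U f K)); apply: clK.
suff : closure (InvS U f K) `<=` InvS U f K by [].
apply: sub_InvS => //; first by move=> z /AK; apply: KU.
  move=> z clz W fzW.
  have : nbhs z (f @^-1` W) by apply: (fc (KU _ (AK _ clz))).
  move=> /clz [v [Iv Wv]]; exists (f v); split => //; exact: InvS_fwd.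
move=> z clz.
have [|||||u Ku [fu H]] := @bwd_gen T hT U f fc K z (set T) (nbhs z)
  (fun W => [set v | InvS U f K v /\ W (f v)]) cK KU.
- by exists setT; apply: filterT.
- move=> W1 W2 zW1 zW2; exists (W1 `&` W2); first exact: filterI.
  by move=> v [Iv [W1v W2v]]; split; split.
- move=> W zW; have [v [Iv Wv]] := clz W zW.
  by have [y Iy fy] := InvS_bwd Iv; exists y; split => //; rewrite fy.
- by move=> W _ v [Iv _]; apply: InvS_sub Iv.
- by move=> W zW; exists W => // v [].
exists u; split => //.
by apply: (closureS _ (H setT filterT)) => v [].
Qed.

End Dyn2.
Lemma omegaE {T : topologicalType} (f : T -> T) x :
  omega_limit f x = Lim (fun n => iter n f x).
Proof. by []. Qed.

Lemma alphaE {T : topologicalType} (sigma : int -> T) :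
  alpha_sol sigma = Lim (fun n => sigma (- (Posz n))%R).
Proof. by []. Qed.

Section Main.
Variables (R : realType) (X : metricType R) (U : set X) (f : X -> X) (S : set X)
  (P : finType) (lt : rel P) (M : P -> set X) (N L : set X).
Hypothesis fc : forall x, U x -> {for x, continuous f}.
Hypothesis hMorse : Morse_decomposition U f S lt M.
Hypothesis hfilt : filtration_pair U f S N L.

Let hT : hausdorff_space X := @metric_hausdorff R X.
Let C := closure (N `\` L).

Lemma N_closed : closed N.
Proof. by case: hfilt => _ [_ [<- _]] _ _ _; apply: closed_closure. Qed.
Lemma L_closed : closed L.
Proof. by case: hfilt => _ [_ [_ <-]] _ _ _; apply: closed_closure. Qed.
Lemma C_closed : closed C.
Proof. exact: closed_closure. Qed.
Lemma N_compact : compact N.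
Proof. by case: hfilt => -[]. Qed.
Lemma L_compact : compact L.
Proof. by case: hfilt => -[_ []]. Qed.
Lemma LN : L `<=` N.
Proof. by case: hfilt => -[_ []]. Qed.
Lemma C_iso : isolating_neighborhood U f C.
Proof. by case: hfilt => _ _ []. Qed.
Lemma C_compact : compact C.
Proof. by case: C_iso. Qed.
Lemma CN : C `<=` N.
Proof.
move=> x /(closureS (@subIsetl _ N (~` L))); exact: N_closed.
Qed.
Lemma NU : N `<=` U.
Proof. by case: hfilt => _ [NU _] _ _ _ x /NU /interior_subset. Qed.
Lemma CU : C `<=` U.
Proof. by move=> x /CN /NU. Qed.
Lemma S_eq : S = InvS U f C.
Proof. by case: hfilt => _ _ [_ ->]. Qed.
Lemma S_int : S `<=` interior C.
Proof. by rewrite S_eq; case: C_iso. Qed.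
Lemma S_C : S `<=` C.
Proof. by rewrite S_eq; apply: InvS_sub. Qed.
Lemma fLC x : L x -> ~ C (f x).
Proof.
move=> Lx Cfx; case: hfilt => _ _ _ _ E.
have : (f @` L `&` closure (N `\` L)) (f x) by split => //; exists x.
by rewrite E.
Qed.
Lemma SL x : S x -> ~ L x.
Proof. by move=> Sx Lx; apply: (fLC Lx); apply: S_C; rewrite S_eq; apply: InvS_fwd; rewrite -S_eq. Qed.
Lemma S_NL : S `<=` N `\` L.
Proof. by move=> x Sx; split; [apply/CN/S_C | apply: SL]. Qed.
Lemma NL_C : N `\` L `<=` C.
Proof. exact: subset_closure. Qed.

Lemma lt_irr : irreflexive lt.
Proof. by case: hMorse => -[]. Qed.
Lemma lt_trans : transitive lt.
Proof. by case: hMorse => -[]. Qed.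
Lemma M_S p : M p `<=` S.
Proof. by case: hMorse. Qed.
Lemma M_eq p q x : M p x -> M q x -> p = q.
Proof.
move=> Mp Mq; case: hMorse => _ _ hd _ _; apply/eqP; apply: contraT => /hd E.
have : (M p `&` M q) x by split. by rewrite E.
Qed.
Lemma M_iso p : exists Np, isolating_neighborhood U f Np /\ M p = InvS U f Np.
Proof. by case: hMorse => _ _ _ /(_ p). Qed.
Lemma M_closed p : closed (M p).
Proof.
have [Np [[cNp NpU _] ->]] := M_iso p; exact: Inv_closed.
Qed.
Lemma M_fwd p x : M p x -> M p (f x).
Proof. by have [Np [_ ->]] := M_iso p; apply: InvS_fwd. Qed.
Lemma Morse_dich x sigma : S x -> solution U f x sigma -> (forall n, S (sigma n)) ->
  (exists p, range sigma `<=` M p) \/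
  (exists p q, lt p q /\ omega_sol f sigma `<=` M p /\ alpha_sol sigma `<=` M q).
Proof. by case: hMorse => _ _ _ _; apply. Qed.


Lemma iter_back (y : nat -> X) : (forall n, f (y n.+1) = y n) ->
  forall i m, (i <= m)%N -> iter i f (y m) = y (m - i)%N.
Proof.
move=> hy; elim=> [|i IH] m im /=; first by rewrite subn0.
rewrite IH; last lia.
have -> : (m - i = (m - i.+1).+1)%N by lia.
by rewrite hy.
Qed.

Section HLemma.
Variable y : nat -> X.
Hypothesis yC : forall n, C (y n).
Hypothesis yf : forall n, f (y n.+1) = y n.

Local Notation A := (Lim y).
Lemma A_C : A `<=` C.
Proof. by apply: (Lim_sub (K0 := 0%N)) => //; exact: C_closed. Qed.
Lemma A_U : A `<=` U.
Proof. by move=> x /A_C /CU. Qed.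
Lemma A_fw z : A z -> A (f z).
Proof.
move=> Az; apply: (Lim_fwd (a := fun n => y n.+1)); [by apply: fc; apply: A_U| exact: yf|].
rewrite -(Lim_shift y 1) in Az.
by rewrite (Lim_ext (t := fun n => y (n + 1)%N)) // => n; rewrite addn1.
Qed.
Lemma A_bw z : A z -> exists z', A z' /\ f z' = z.
Proof.
move=> Az; have [z' [Lz' _ fz']] := Lim_bwd hT fc C_compact CU
  (a := fun n => y n.+1) (b := y) (fun n => @yC n.+1) yf Az.
exists z'; split => //; rewrite -(Lim_shift y 1).
by rewrite (Lim_ext (t := fun n => y n.+1)) // => n; rewrite addn1.
Qed.
Lemma A_S : A `<=` S.
Proof. rewrite S_eq; apply: sub_InvS => //; [exact: A_C|exact: A_U|exact: A_fw|exact: A_bw]. Qed.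
Lemma A_iter z n : A z -> A (iter n f z).
Proof. by move=> Az; elim: n => [|n IH] //=; apply: A_fw. Qed.
Lemma A_sol z : A z -> exists sigma, solution U f z sigma /\ forall n, A (sigma n).
Proof. by apply: inv_solution; [exact: A_U|exact: A_fw|exact: A_bw]. Qed.
Lemma A_closed : closed A.
Proof. exact: closed_Lim. Qed.

Lemma A_omega a : A a -> Lim (fun n => iter n f a) `<=` A.
Proof. by move=> Aa; apply: (Lim_sub (K0 := 0%N)); [exact: A_closed|move=> n _; apply: A_iter]. Qed.
Lemma A_omega_ne a : A a -> exists v, Lim (fun n => iter n f a) v.
Proof.
move=> Aa; have [v [Lv _]] := Lim_nonempty C_compact (fun n => A_C (A_iter (n := n) Aa)).
by exists v.
Qed.
Lemma A_alpha sigma : (forall n, A (sigma n)) ->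
  Lim (fun n => sigma (- (Posz n))%R) `<=` A /\ exists v, Lim (fun n => sigma (- (Posz n))%R) v.
Proof.
move=> sA; split.
  by apply: (Lim_sub (K0 := 0%N)); [exact: A_closed|move=> n _; apply: sA].
have [v [Lv _]] := Lim_nonempty C_compact (fun n => A_C (sA (- (Posz n))%R)).
by exists v.
Qed.

Lemma A_meet a : A a -> exists p x, A x /\ M p x.
Proof.
move=> Aa; have [s [sol sA]] := A_sol Aa.
have [[p rp]|[p1 [p2 [_ [om _]]]]] :=
  Morse_dich (A_S Aa) sol (fun n => A_S (sA n)).
  by exists p, a; split => //; apply: rp; exists 0%R => //; case: sol.
have [v Lv] := A_omega_ne Aa.
exists p1, v; split; first exact: (A_omega Aa).
by apply: om; rewrite /omega_sol; case: sol => -> _ _.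
Qed.

Lemma H_main : exists q, A `<=` M q.
Proof.
have [a [Aa _]] := Lim_nonempty C_compact yC.
have [p0 [x0 [Ax0 Mx0]]] := A_meet Aa.
pose Qb p := `[< exists x, A x /\ M p x >].
have Qp0 : Qb p0 by apply/asboolP; exists x0.
pose cnt q := #|[set r | lt r q]%SET|.
case: (arg_maxnP cnt Qp0) => q /asboolP [z [Az Mqz]] qmax.
have maxq : forall p x, A x -> M p x -> ~ lt q p.
  move=> p x Ax Mpx ltqp.
  have : (cnt p <= cnt q)%N by apply: qmax; apply/asboolP; exists x.
  apply/negP; rewrite -ltnNge; apply: proper_card; apply/properP; split.
    by apply/fintype.subsetP => r; rewrite !inE => rq; exact: lt_trans rq ltqp.
  by exists q; rewrite !inE ?ltqp ?lt_irr.
have [Nq [[cNq NqU NqI] eMq]] := M_iso q.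
suff AN : A `<=` Nq.
  exists q; rewrite eMq; apply: sub_InvS => //; [exact: A_U|exact: A_fw|exact: A_bw].
apply: contrapT => nAN.
have [w [Aw nw]] : exists w, A w /\ ~ Nq w.
  apply: contrapT => h; apply: nAN => w' Aw'; apply: contrapT => nw'; apply: h.
  by exists w'.
have clNq : closed Nq := compact_closed hT cNq.
have MqI : M q `<=` interior Nq by rewrite eMq.
have Mq_iter : forall i, M q (iter i f z) by elim=> [|i IH] //=; apply: M_fwd.
have MqU : forall i, U (iter i f z).
  by move=> i; apply: NU; apply: CN; apply: S_C; apply: M_S; apply: Mq_iter.
have step1 : forall Lc, nbhs z [set x | forall i, (i <= Lc)%N -> Nq (iter i f x)].
  elim=> [|Lc IH].
    by apply: filterS (MqI _ Mqz) => x Nx i; rewrite leqn0 => /eqP ->.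
  have hc : nbhs z (iter Lc.+1 f @^-1` Nq).
    exact: (iter_cont fc (n := Lc.+1) (z := z) (fun j _ => MqU j)) _ (MqI _ (Mq_iter Lc.+1)).
  apply: filterS (filterI IH hc) => x [h1 h2] i.
  by rewrite leq_eqVlt => /orP [/eqP -> //|]; rewrite ltnS; exact: h1.
pose E Lc K n := [/\ (K < n)%N, (Lc <= n)%N, ~ interior Nq (y n) &
  forall i, (0 < i)%N -> (i <= Lc)%N -> Nq (y (n - i)%N)].
have wN : nbhs w (~` Nq) by apply: open_nbhs_nbhs; split => //; exact: closed_openC.
have step2 : forall Lc K, exists n, E Lc K n.
  move=> Lc K; have /LimP := Az => /(_ (K + Lc)%N _ (step1 Lc)) [m [Km Bm]].
  have /LimP := Aw => /(_ m _ wN) [n' [mn' nn']].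
  pose Pn j := (m <= j)%N && ~~ `[< Nq (y j) >].
  have exP : exists j, Pn j.
    by exists n'; rewrite /Pn (ltnW mn') /=; apply/asboolPn.
  case: (ex_minnP exP) => n /andP [mn /asboolPn nNq] nmin.
  exists n; split; [lia|lia| by move/interior_subset |].
  move=> i i0 iL; case: (leqP m (n - i)) => h.
    apply: contrapT => nh.
    have : (n <= n - i)%N by apply: nmin; rewrite /Pn h /=; apply/asboolPn.
    lia.
  have e : (m - (m - (n - i)) = n - i)%N by lia.
  have i'L : (m - (n - i) <= Lc)%N by lia.
  have i'm : (m - (n - i) <= m)%N by lia.
  by have := Bm _ i'L; rewrite (iter_back yf i'm) e.
have [||||u Cu Hu] := @compact_directed X C (nat * nat)%type setT
  (fun p => [set y n | n in [set n | E p.1 p.2 n]]) C_compact.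
- by exists (0,0)%N.
- move=> [L1 K1] [L2 K2] _ _; exists (maxn L1 L2, maxn K1 K2) => //=.
  move=> _ [n [h1 h2 h3 h4] <-]; split; exists n => //; split => //; try lia;
    move=> i i0 iL; apply: h4 => //; lia.
- by move=> [Lc K] _; have [n En] := step2 Lc K; exists (y n); apply: imageP.
- by move=> p _ _ [n _ <-].
have Au : A u.
  apply/LimP => K W uW.
  by have [_ [[n [Kn _ _ _] <-] Wn]] := Hu (0%N, K) I W uW; exists n.
have nIu : ~ interior Nq u.
  move=> Iu; have : nbhs u (interior Nq).
    by apply: open_nbhs_nbhs; split => //; exact: open_interior.
  by move=> /(Hu (0%N,0%N) I) [_ [[n [_ _ nI _] <-] In]].
have fwN : forall i, (0 < i)%N -> Nq (iter i f u).
  move=> i i0; apply: contrapT => nN.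
  have hU : forall j, (j < i)%N -> U (iter j f u).
    by move=> j _; apply: A_U; apply: A_iter.
  have : nbhs u (iter i f @^-1` (~` Nq)).
    apply: (iter_cont fc hU); apply: open_nbhs_nbhs; split => //.
    exact: closed_openC.
  move=> /(Hu (i, 0%N) I) [_ [[n [_ iLn _ h4] <-] nNn]].
  by apply: nNn; rewrite /= (iter_back yf iLn); apply: h4.
have [s [sol sA]] := A_sol Au.
pose om := Lim (fun n => iter n f u).
have omA : om `<=` A := A_omega Au.
have [v omv] := A_omega_ne Au.
have omMq : om `<=` M q.
  rewrite eMq; apply: sub_InvS.
  - by apply: (Lim_sub (K0 := 0%N)) => // n n0; exact: fwN.
  - by move=> x /omA /A_U.
  - move=> x omx; rewrite /om -(Lim_shift _ 1).
    apply: (Lim_fwd (a := fun n => iter n f u)) => //.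
      by apply: fc; apply: A_U; apply: omA.
    by move=> n; rewrite addn1.
  - move=> x omx.
    have ob : Lim (fun n => iter n.+1 f u) x.
      rewrite (Lim_ext (t := fun n => iter (n + 1)%N f u)) ?Lim_shift //.
      by move=> n; rewrite addn1.
    have [z' [Lz' _ fz']] := Lim_bwd hT fc C_compact CU
      (a := fun n => iter n f u) (b := fun n => iter n.+1 f u)
      (fun n => A_C (A_iter (n := n) Au)) (fun n => erefl) ob.
    by exists z'.
have Su : S u := A_S Au.
case: (Morse_dich Su sol (fun n => A_S (sA n))) => [[r rr]|[p1 [p2 [lt12 [om1 al2]]]]].
  have omr : om `<=` M r.
    apply: (Lim_sub (K0 := 0%N)) => [|n _]; first exact: M_closed.
    by rewrite (sol_iter n sol); apply: rr; exists (Posz n).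
  have rq : r = q := M_eq (omr _ omv) (omMq _ omv).
  apply: nIu; apply: MqI; rewrite -rq; apply: rr; exists 0%R => //.
  by case: sol.
have om_eq : omega_sol f s = om by rewrite /omega_sol; case: sol => ->.
have p1q : p1 = q.
  by apply: (M_eq (x := v)); [apply: om1; rewrite om_eq | exact: omMq].
have [alA [v2 alv2]] := A_alpha sA.
by apply: (maxq p2 v2); [exact: alA | exact: al2 | rewrite -p1q].
Qed.

End HLemma.
Local Notation PQ := (pquot N L).
Local Notation pqm := (pq N L).
Local Notation fPm := (fP N L f).


Lemma pq_val (t : set_type (N `\` L)) : pqm (val t) = Some t.
Proof.
case: t => x h; rewrite /pq /=; case: pselect => [h'|nh].
  by rewrite (Prop_irrelevance h' h).
by exfalso; apply: nh.
Qed.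

Lemma pq_none x : ~ (N `\` L) x -> pqm x = None.
Proof.
by move=> nx; rewrite /pq; case: pselect => // h; exfalso; apply: nx; apply: set_mem.
Qed.

Lemma pq_Some x t : pqm x = Some t -> x = val t.
Proof.
rewrite /pq; case: pselect => // h [<-] //.
Qed.

Lemma NL_val (t : set_type (N `\` L)) : (N `\` L) (val t).
Proof. by apply: set_mem; apply: (valP t). Qed.

Lemma pqP x : ((N `\` L) x /\ exists t, pqm x = Some t /\ val t = x) \/
              (~ (N `\` L) x /\ pqm x = None).
Proof.
case: (pselect ((N `\` L) x)) => h; last by right; split => //; apply: pq_none.
left; split => //; exists (exist _ x (mem_set h)); split => //.
by rewrite -[in LHS](_ : val (exist _ x (mem_set h) : set_type (N `\` L)) = x) // pq_val.
Qed.

Lemma pq_NL_some x : (N `\` L) x -> exists t, pqm x = Some t /\ val t = x.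
Proof. by case: (pqP x) => [[_ h]|[nh _]]. Qed.

Lemma pq_inj x1 x2 : (N `\` L) x1 -> pqm x1 = pqm x2 -> x1 = x2.
Proof.
move=> h1 e; have [t [e1 v1]] := pq_NL_some h1.
by rewrite -v1; apply/esym; apply: pq_Some; rewrite -e.
Qed.

Definition pval (d : X) (y : PQ) : X := if y is Some t then val t else d.

Lemma pq_pval d y : y <> None -> pqm (pval d y) = y.
Proof. by case: y => // t _; rewrite /= pq_val. Qed.

Lemma pval_NL d y : y <> None -> (N `\` L) (pval d y).
Proof. by case: y => // t _; apply: NL_val. Qed.

Lemma open_pq (O : set PQ) : open O ->
  exists W, open W /\ N `&` (pqm @^-1` O) = N `&` W.
Proof. by []. Qed.

Lemma open_pq_some (O : set PQ) t : open O -> O (Some t) ->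
  exists W, [/\ open W, W (val t) & forall x, N x -> W x -> O (pqm x)].
Proof.
move=> /open_pq [W [oW e]] Ot; exists W; split => //.
  have : (N `&` (pqm @^-1` O)) (val t).
    by split; [case: (NL_val t) | rewrite /= pq_val].
  by rewrite e => -[].
move=> x Nx Wx; have : (N `&` W) x by []. by rewrite -e => -[].
Qed.

Lemma open_pq_none (O : set PQ) : open O -> O None ->
  exists W, [/\ open W, L `<=` W & forall x, N x -> W x -> O (pqm x)].
Proof.
move=> /open_pq [W [oW e]] ON; exists W; split => //.
  move=> x Lx; have : (N `&` (pqm @^-1` O)) x.
    by split; [exact: LN | rewrite /= pq_none // => -[]].
  by rewrite e => -[].
move=> x Nx Wx; have : (N `&` W) x by []. by rewrite -e => -[].
Qed.

Definition OS (W : set X) : set PQ := fun y => if y is Some t then W (val t) else False.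
Definition ON (W : set X) : set PQ := fun y => if y is Some t then W (val t) else True.

Lemma OS_open W : open W -> open (OS W).
Proof.
move=> oW; exists (W `&` ~` L); split.
  by apply: openI => //; apply: closed_openC; exact: L_closed.
apply/seteqP; split => x [Nx h]; split => //.
  move: h; rewrite /preimage /=.
  case: (pqP x) => [[[_ nLx] [t [-> ex]]] h|[nx ->] //]; subst x; by split.
case: h => Wx nLx; have [t [e v]] := pq_NL_some (conj Nx nLx).
by rewrite /preimage /= e /= v.
Qed.

Lemma ON_open W : open W -> L `<=` W -> open (ON W).
Proof.
move=> oW LW; exists W; split => //.
apply/seteqP; split => x [Nx h]; split => //.
  move: h; rewrite /preimage /=.
  case: (pqP x) => [[_ [t [-> ex]]] //|[nx _] _]; first by subst x.
  by apply: LW; apply: contrapT => nLx; apply: nx.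
rewrite /preimage /=.
by case: (pqP x) => [[_ [t [-> ex]]]|[_ ->] //]; subst x.
Qed.

Lemma nbhs_openP (T : topologicalType) (y : T) (A : set T) :
  nbhs y A -> exists O, [/\ open O, O y & O `<=` A].
Proof. move=> h; rewrite nbhsE in h; case: h => O [oO Oy] OA; by exists O. Qed.

Lemma open_nbhs' (T : topologicalType) (y : T) (O : set T) : open O -> O y -> nbhs y O.
Proof. by move=> oO Oy; apply: open_nbhs_nbhs. Qed.
Lemma T1 (s : nat -> X) K0 t : (forall n, (K0 < n)%N -> (N `\` L) (s n)) ->
  Lim (fun n => pqm (s n)) (Some t) -> Lim s (val t).
Proof.
move=> sNL /LimP H; apply/LimP => K W /nbhs_openP [W' [oW' W't W'W]].
have /H : nbhs (Some t : PQ) (OS W') by apply: open_nbhs'; [exact: OS_open|].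
move=> /(_ (maxn K K0)) [n [Kn On]]; exists n; split; first lia.
apply: W'W; have [t' [e v]] := pq_NL_some (sNL n ltac:(lia)).
by move: On; rewrite e /= v.
Qed.

Lemma T2 (s : nat -> X) K0 : (forall n, (K0 < n)%N -> (N `\` L) (s n)) ->
  Lim (fun n => pqm (s n)) None -> exists l, L l /\ Lim s l.
Proof.
move=> sNL /LimP H.
have [||||u Cu Hu] := @compact_directed X C (nat * set X)%type
  (fun p => open p.2 /\ L `<=` p.2)
  (fun p => [set s n | n in [set n | (p.1 < n)%N /\ (K0 < n)%N /\ p.2 (s n)]]) C_compact.
- by exists (0%N, setT); split => //; exact: openT.
- move=> [i W1] [j W2] [hO1 L1] [hO2 L2]; exists (maxn i j, W1 `&` W2).
    by split; [exact: openI | move=> x Lx; split; [apply: L1|apply: L2]].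
  move=> _ [n [Kn [K0n [W1n W2n]]] <-]; rewrite /= in Kn.
  by split; exists n => //=; (split; [lia | split]).
- move=> [K W] [hoW LW].
  have /H : nbhs (None : PQ) (ON W) by apply: open_nbhs'; [exact: ON_open|].
  move=> /(_ (maxn K K0)) [n [Kn On]]; exists (s n); exists n => //=.
  split; first lia; split; first lia.
  have [t' [e v]] := pq_NL_some (sNL n ltac:(lia)).
  by move: On; rewrite e /= v.
- by move=> [K W] _ _ [n [_ [K0n _]] <-]; apply: NL_C; apply: sNL.
have Lu : Lim s u.
  apply/LimP => K W uW.
  have [_ [[n [Kn _] <-] Wn]] := Hu (K, setT) (conj openT (fun _ _ => I)) W uW.
  by exists n.
exists u; split => //; apply: contrapT => nLu.
have : nbhs u (~` L) by apply: open_nbhs'; [apply: closed_openC; exact: L_closed|].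
move=> /(@uniform_regular X u) [V uV clV].
have oW : open (~` closure V) by apply: closed_openC; exact: closed_closure.
have LW : L `<=` ~` closure V by move=> x Lx /clV.
have [_ [[n [_ [_ Wn]] <-] Vn]] := Hu (0%N, ~` closure V) (conj oW LW) V uV.
by apply: Wn; apply: subset_closure.
Qed.

Lemma TL (s : nat -> X) (T : set X) K0 : (forall n, (K0 < n)%N -> (N `\` L) (s n)) ->
  Lim s `<=` T -> T `<=` S -> Lim (fun n => pqm (s n)) `<=` pqm @` T.
Proof.
move=> sNL LT TS [t|] Ly.
  by exists (val t); [apply: LT; exact: (T1 sNL Ly) | exact: pq_val].
have [l [Ll Lsl]] := T2 sNL Ly.
by exfalso; apply: (SL (TS _ (LT _ Lsl))).
Qed.

Lemma pq_compact K : compact K -> K `<=` N -> compact (pqm @` K).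
Proof.
move=> cK KN F PF FK.
pose G := filter_from F (fun V => K `&` pqm @^-1` V).
have FG : Filter G.
  apply: filter_from_filter; first by exists setT; exact: filterT.
  move=> V1 V2 F1 F2; exists (V1 `&` V2); first exact: filterI.
  by move=> x [Kx [h1 h2]]; split; split.
have PG : ProperFilter G.
  apply: filter_from_proper => // V FV.
  have [_ [[x Kx <-] Vx]] : (pqm @` K `&` V) !=set0.
    have /filter_ex [y hy] : F (pqm @` K `&` V) by apply: filterI.
    by exists y.
  by exists x.
have [|x [Kx clx]] := cK G PG; first by exists setT; [exact: filterT| move=> x []].
exists (pqm x); split; first by exists x.
move=> V O FV /nbhs_openP [Q [oQ Qx QO]].
have [W [oW e]] := open_pq oQ.
have Wx : W x.
  have : (N `&` (pqm @^-1` Q)) x by split => //; apply: KN.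
  by rewrite e => -[].
have [x' [[Kx' Vx'] Wx']] := clx (K `&` pqm @^-1` V) W
  (ex_intro2 _ _ V FV (fun z h => h)) (open_nbhs' oW Wx).
exists (pqm x'); split => //; apply: QO.
have : (N `&` W) x' by split => //; apply: KN.
by rewrite -e => -[].
Qed.

Lemma sol_pq (tau : int -> X) x : solution U f x tau -> (forall n, (N `\` L) (tau n)) ->
  solution setT fPm (pqm x) (fun n => pqm (tau n)).
Proof.
move=> [t0 tU tf] tNL; split => //=; first by rewrite t0.
move=> n; have [t [e v]] := pq_NL_some (tNL n).
by rewrite e /= v tf.
Qed.

Lemma pq_sol (sigma : int -> PQ) y d : solution setT fPm y sigma ->
  (forall n, sigma n <> None) ->
  solution U f (pval d y) (fun n => pval d (sigma n)).
Proof.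
move=> [s0 _ sf] sN; split => //=; first by rewrite s0.
  by move=> n; apply: NU; case: (pval_NL d (sN n)).
move=> n; have := sf n; case E: (sigma n) => [t|] //=; last by have := sN n; rewrite E.
case E1: (sigma (n + 1)%R) => [t'|]; last by have := sN (n + 1)%R; rewrite E1.
by move=> /pq_Some.
Qed.
Lemma sepO : exists Q, [/\ open Q, C `<=` Q & forall z, L z -> ~ closure Q (f z)].
Proof.
apply: contrapT => nO.
have H : forall Q, open Q -> C `<=` Q -> exists z, L z /\ closure Q (f z).
  move=> Q oO CO; apply: contrapT => h; apply: nO; exists Q; split => // z Lz cz.
  by apply: h; exists z.
have [||||u Lu Hu] := @compact_directed X L (set X)
  (fun Q => open Q /\ C `<=` Q) (fun Q => [set z | L z /\ closure Q (f z)]) L_compact.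
- by exists setT; split => //; exact: openT.
- move=> Q1 Q2 [hO1 C1] [hO2 C2]; exists (Q1 `&` Q2).
    by split; [exact: openI | move=> x Cx; split; [apply: C1|apply: C2]].
  by move=> z [Lz /closureI [c1 c2]]; split.
- by move=> Q [hO CO]; have [z hz] := H Q hO CO; exists z.
- by move=> Q _ z [].
have nCfu : ~ C (f u) by apply: fLC.
have : nbhs (f u) (~` C) by apply: open_nbhs'; [apply: closed_openC; exact: C_closed|].
move=> /(@uniform_regular X (f u)) [V fuV clV].
have oW : open (~` closure V) by apply: closed_openC; exact: closed_closure.
have CW : C `<=` ~` closure V by move=> x Cx /clV.
have : nbhs u (f @^-1` interior V).
  by apply: (fc (NU (LN Lu))); apply: nbhs_interior.
move=> /(Hu _ (conj oW CW)) [z [[Lz clz] Iz]].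
have : nbhs (f z) (interior V) by apply: open_nbhs'; [exact: open_interior|].
move=> /clz [w [nw Iw]]; apply: nw; apply: subset_closure; exact: interior_subset.
Qed.

Lemma iso_none : isolated_invariant_set (@setT PQ) fPm [set None].
Proof.
have [Q [oO CO nclO]] := sepO.
pose K0 := [set x | N x /\ ~ Q (f x)].
have K0N : K0 `<=` N by move=> x [].
have clK0 : closed K0.
  move=> x clx; have Nx : N x by apply: N_closed; apply: (closureS K0N).
  split => // Ofx.
  have : nbhs x (f @^-1` Q) by apply: (fc (NU Nx)); apply: open_nbhs'.
  by move=> /clx [z [[_ nOz] Oz]].
have cK0 : compact K0 by apply: (subclosed_compact clK0 N_compact).
pose N0 := [set None] `|` pqm @` K0.
exists N0.
have InvN0 : InvS (@setT PQ) fPm N0 `<=` [set None].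
  move=> [t|] // [_ [s [[s0 _ sf] sN0]]].
  have := sf (-1)%R; rewrite addNr s0.
  case E: (s (-1)%R) => [t'|] //= e.
  have := sN0 (-1)%R; rewrite E => -[//|[x' [Nx' nOx'] ex']].
  have vx' := pq_Some ex'; subst x'.
  exfalso; apply: nOx'; apply: CO; apply: NL_C; rewrite (pq_Some e); exact: NL_val.
have NoneInv : [set None] `<=` InvS (@setT PQ) fPm N0.
  move=> y ->; rewrite /InvS /=; split; first by hnf; left.
  exists (fun _ => None); split; first by split.
  by move=> n; hnf; left.
split; last by apply/seteqP; split.
split => //.
  apply: compactU; first exact: compact_set1.
  exact: pq_compact.
move=> y /InvN0 ->.
pose W := interior (f @^-1` (~` closure Q)).
have oW : open W by exact: open_interior.
have LW : L `<=` W.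
  move=> z Lz; apply: (fc (NU (LN Lz))); apply: open_nbhs'; last exact: nclO.
  by apply: closed_openC; exact: closed_closure.
apply: filterS (@open_nbhs' _ (None : PQ) _ (ON_open oW LW) I) => -[t|] h; last by hnf; left.
hnf; right; exists (val t); last exact: pq_val.
split; first by case: (NL_val t).
have := interior_subset h; rewrite /= => ncl Ofx; apply: ncl.
exact: subset_closure.
Qed.
Lemma iso_some p : isolated_invariant_set (@setT PQ) fPm (pqm @` M p).
Proof.
have [Np [[cNp NpU NpI] eMp]] := M_iso p.
pose K := [set x | Np x /\ C x /\ C (f x)].
have KNp : K `<=` Np by move=> x [].
have clK : closed K.
  move=> x clx.
  have Npx : Np x by apply: (compact_closed hT cNp); apply: (closureS KNp).
  have Cx : C x by apply: C_closed; apply: (closureS (fun z (h : K z) => h.2.1)).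
  split => //; split => //; apply: C_closed => W fxW.
  have : nbhs x (f @^-1` W) by apply: (fc (NpU _ Npx)).
  by move=> /clx [z [[_ [_ Cfz]] Wfz]]; exists (f z).
have cK : compact K by apply: (subclosed_compact clK cNp).
have KNL : K `<=` N `\` L.
  move=> x [_ [Cx Cfx]]; split; first exact: CN.
  by move=> Lx; apply: (fLC Lx).
pose N1 := pqm @` K.
exists N1.
have MpK : M p `<=` K.
  move=> x Mx; split; first by move: (Mx); rewrite eMp => -[].
  split; first exact: (S_C (M_S Mx)).
  exact: (S_C (M_S (M_fwd Mx))).
have E : pqm @` M p = InvS (@setT PQ) fPm N1.
  apply/seteqP; split.
    move=> _ [x Mx <-]; move: (Mx); rewrite {1}eMp => -[_ [tau [sol tNp]]].
    have tM : forall n, M p (tau n).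
      by move=> n; rewrite eMp; apply: (InvS_sol sol tNp).
    split; first by exists x => //; apply: MpK.
    exists (fun n => pqm (tau n)); split.
      by apply: sol_pq => // n; apply: S_NL; apply: M_S.
    by move=> n; exists (tau n) => //; apply: MpK.
  move=> y [_ [s [sol sN1]]].
  have sNone : forall n, s n <> None.
    by move=> n; have [x Kx <-] := sN1 n; have [t [-> _]] := pq_NL_some (KNL _ Kx).
  have [d _] : exists d : X, True.
    by have [x _ _] := sN1 0%R; exists x.
  have xsol := pq_sol d sol sNone.
  have xK : forall n, K (pval d (s n)).
    move=> n; have [x Kx ex] := sN1 n.
    have [t [et vt]] := pq_NL_some (KNL _ Kx).
    by rewrite -ex et /= vt.
  exists (pval d y); last by apply: pq_pval; case: sol => <- _ _.
  rewrite eMp; split; first by case: sol => <- _ _; apply: KNp.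
  by exists (fun n => pval d (s n)); split => // n; apply: KNp.
split; last exact: E.
split => //; first exact: pq_compact (fun x Kx => (KNL _ Kx).1).
rewrite -E => _ [x Mx <-].
have Sx : S x := M_S Mx.
have xK : nbhs x K.
  have h1 : nbhs x Np by apply: NpI; rewrite -eMp.
  have h2 : nbhs x C by apply: S_int.
  have h3 : nbhs x (f @^-1` C).
    by apply: (fc (NpU _ (KNp _ (MpK _ Mx)))); apply: S_int; exact: (M_S (M_fwd Mx)).
  by apply: filterS (filterI h1 (filterI h2 h3)) => z [a [b c]].
have oW : open (interior K) := @open_interior _ K.
have [t [et vt]] := pq_NL_some (S_NL Sx).
have : nbhs (Some t : PQ) (OS (interior K)) by apply: open_nbhs'; [exact: OS_open|rewrite /= vt].
rewrite et; apply: filterS => -[t'|] //= h.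
exists (val t'); first exact: interior_subset.
exact: pq_val.
Qed.
Lemma dich5 x (s : int -> PQ) : solution setT fPm x s ->
  (exists p, range s `<=` hat_M N L M p) \/
  (exists p q, hat_lt lt p q /\ omega_sol fPm s `<=` hat_M N L M p /\
               alpha_sol s `<=` hat_M N L M q).
Proof.
move=> sol; have s0 : s 0%R = x by case: sol.
subst x.
have om_eq : omega_sol fPm s = Lim (fun n => s (Posz n)).
  by rewrite /omega_sol omegaE; apply: Lim_ext => n; exact: (sol_iter n sol).
have none_after : forall k, s k = None -> forall j, (k <= j)%R -> s j = None.
  move=> k sk.
  have fwN : forall i : nat, s (k + Posz i)%R = None.
    elim=> [|i IH]; first by rewrite addr0.
    have -> : (k + Posz i.+1 = k + Posz i + 1)%R by lia.
    by case: sol => _ _ <-; rewrite IH.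
  move=> j kj; have -> : j = (k + Posz (absz (j - k)))%R by lia.
  exact: fwN.
have step : forall d j, s j <> None -> s (j + 1)%R <> None ->
    f (pval d (s j)) = pval d (s (j + 1)%R).
  move=> d j h1 h2; case: sol => _ _ /(_ j).
  case E1: (s j) h1 => [t|] // _; case E2: (s (j + 1)%R) h2 => [t'|] // _.
  by move=> /pq_Some.
case: (pselect (forall n, s n = None)) => [hA|nA].
  by left; exists None => _ [n _ <-]; exact: hA n.
case: (pselect (forall n, s n <> None)) => [hB|nB].
  have [t0 _] : exists t0, s 0%R = Some t0.
    by case E: (s 0%R) => [t|]; [exists t | have := hB 0%R; rewrite E].
  pose d := val t0.
  have xsol := pq_sol d sol hB.
  pose xs := fun n => pval d (s n).
  have xNL : forall n, (N `\` L) (xs n) by move=> n; rewrite /xs; exact: (pval_NL d (hB n)).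
  have Sx : forall n, S (xs n).
    by move=> n; rewrite S_eq; apply: (InvS_sol xsol) => m; apply: NL_C; exact: xNL.
  have pqx : forall n, pqm (xs n) = s n by move=> n; rewrite /xs; exact: (pq_pval d (hB n)).
  case: (Morse_dich (Sx 0%R) xsol Sx) => [[p rp]|[p1 [p2 [l12 [hom1 a2]]]]].
    left; exists (Some p) => _ [n _ <-]; exists (xs n); last exact: pqx.
    by apply: rp; exists n.
  right; exists (Some p1), (Some p2); split => //; split.
    rewrite om_eq (Lim_ext (t := fun n => pqm (xs (Posz n)))); last by move=> n; rewrite pqx.
    apply: (TL (K0 := 0%N)) => [n _||]; [exact: xNL | | exact: M_S].
    move: hom1; rewrite /omega_sol omegaE.
    by rewrite (Lim_ext (t := fun n => xs (Posz n))) // => n; exact: (sol_iter n xsol).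
  rewrite alphaE (Lim_ext (t := fun n => pqm (xs (- Posz n)%R))); last by move=> n; rewrite pqx.
  by apply: (TL (K0 := 0%N)) => [n _||]; [exact: xNL | exact: a2 | exact: M_S].
have [m sm] : exists m, s m <> None.
  apply: contrapT => h; apply: nA => n; apply: contrapT => hn; apply: h; by exists n.
have [k sk] : exists k, s k = None.
  apply: contrapT => h; apply: nB => n hn; apply: h; by exists n.
have beN : forall j : nat, (absz m <= j)%N -> s (- Posz j)%R <> None.
  by move=> j mj e; apply: sm; apply: (none_after _ e); lia.
have [d _] : exists d : X, True.
  by case E: (s m) sm => [t|] // _; exists (val t).
pose M0 := absz m.
pose y := fun n => pval d (s (- Posz (n + M0))%R).
have yNL : forall n, (N `\` L) (y n).
  by move=> n; apply: pval_NL; apply: beN; lia.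
have yf : forall n, f (y n.+1) = y n.
  move=> n; rewrite /y step; [|apply: beN; lia|].
    by have -> : (- Posz (n.+1 + M0) + 1 = - Posz (n + M0))%R by lia.
  have -> : (- Posz (n.+1 + M0) + 1 = - Posz (n + M0))%R by lia.
  by apply: beN; lia.
have [q hq] := H_main (fun n => NL_C (yNL n)) yf.
right; exists None, (Some q); split => //; split.
  rewrite om_eq => -[t|] // Lt; exfalso.
  have oS : open (OS setT) by apply: OS_open; exact: openT.
  have [n [kn sn]] := (LimP _ _).1 Lt (absz k) _ (@open_nbhs' _ (Some t : PQ) _ oS I).
  have e : s (Posz n) = None by apply: (none_after _ sk); lia.
  by move: sn; rewrite e.
rewrite alphaE -(Lim_shift (fun n => s (- Posz n)%R) M0).
rewrite (Lim_ext (t := fun n => pqm (y n))); last by move=> n; rewrite pq_pval //; apply: beN; lia.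
by apply: (TL (K0 := 0%N)) => [n _||]; [exact: yNL | exact: hq | exact: M_S].
Qed.
Lemma hatMorse : Morse_decomposition (@setT PQ) fPm
  (InvS (@setT PQ) fPm (@setT PQ)) (hat_lt lt) (hat_M N L M).
Proof.
split.
- split.
    by case=> [p|] //=; rewrite lt_irr.
  case=> [b|] [a|] [c|] //=; exact: lt_trans.
- move=> [p|] y.
    move=> [x Mx <-]; have Sx := M_S Mx.
    move: (Sx); rewrite S_eq => -[_ [tau [sol tC]]].
    rewrite /InvS /=; split => //.
    exists (fun n => pqm (tau n)); split => //.
    apply: (sol_pq sol) => n; apply: S_NL; rewrite S_eq; exact: (InvS_sol sol tC n).
  move=> ->; rewrite /InvS /=; split => //.
  by exists (fun _ => None); split => //; split.
- move=> [p|] [q|] //= hpq; apply/seteqP; split => // y [h1 h2]; exfalso.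
  + case: h1 h2 => [x1 M1 <-] [x2 M2 e].
    have ex := pq_inj (S_NL (M_S M2)) e; subst x2.
    by move: hpq; rewrite (M_eq M1 M2) eqxx.
  + case: h1 h2 => [x1 M1 <-] e.
    have [t [et _]] := pq_NL_some (S_NL (M_S M1)).
    by move: e; rewrite et.
  + case: h2 h1 => [x1 M1 <-] e.
    have [t [et _]] := pq_NL_some (S_NL (M_S M1)).
    by move: e; rewrite et.
- by move=> [p|]; [exact: iso_some | exact: iso_none].
- by move=> x s _ sol _; exact: (dich5 sol).
Qed.
End Main.

Theorem mainTheorem14 (R : realType) (X : metricType R)
  (U : set X) (f : X -> X) (S : set X)
  (P : finType) (lt : rel P) (M : P -> set X) (N L : set X) :
  locally_compact [set: X] ->
  open U ->
  (forall x, U x -> {for x, continuous f}) ->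
  isolated_invariant_set U f S ->
  Morse_decomposition U f S lt M ->
  filtration_pair U f S N L ->
  Morse_decomposition (@setT (pquot N L)) (fP N L f)
    (InvS (@setT (pquot N L)) (fP N L f) (@setT (pquot N L)))
    (hat_lt lt) (hat_M N L M).
Proof.
move=> _ _ fc _ hM hF; exact: (hatMorse fc hM hF).
Qed.
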